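(* Let $a\in\mathbb C\setminus\{0\}$ and $b\in\mathbb C$. Then (a) $\{\widehat{\mathcal B}(a,b)_n:n\ge0\}$ is a generating set of the algebra $\mathsf{NSym}$; (b) $\{\mathrm{comm}(\widehat{\mathcal B}(a,b)_n):n\ge0\}$ is a generating set of the algebra $\mathsf{Sym}$.
   Context: $\mathsf{NSym}$ is the algebra of noncommutative symmetric functions over $\mathbb C$ (free associative on $H_1,H_2,\dots$, with $H_\beta=H_{\beta_1}\cdots H_{\beta_l}$), $\mathsf{Sym}$ the algebra of symmetric functions, and $\mathrm{comm}:\mathsf{NSym}\to\mathsf{Sym}$ the algebra homomorphism with $H_n\mapsto h_n$ (complete homogeneous symmetric function). $\widehat{\mathcal B}(a,b)_0=1$ and for $n\ge1$, $\widehat{\mathcal B}(a,b)_n=\sum_{\beta}a^{n-\ell(\beta)}b^{\ell(\beta)-1}H_\beta$, the sum over all compositions $\beta$ of $n$, with the convention $0^0=1$ ($\ell(\beta)$ the number of parts). *)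

(* Defs.v *)
From HB Require Import structures.
From mathcomp Require Import all_boot all_order all_algebra.
From mathcomp Require Import complex.
From mathcomp Require Import Rstruct.
From Stdlib Require Rdefinitions.
Set Implicit Arguments. Unset Strict Implicit. Unset Printing Implicit Defensive.
Import Order.TTheory GRing.Theory Num.Theory.
Local Open Scope ring_scope.

Notation C := (Rdefinitions.R)[i].

Definition is_comp (s : seq nat) : bool := all (fun k : nat => (0 < k)%N) s.

(* compsf fuel n : all compositions of n (fuel >= n suffices). *)
Fixpoint compsf (fuel n : nat) : seq (seq nat) :=
  if n == 0%N then [:: [::]] else
  match fuel with
  | 0 => [::]
  | f.+1 => flatten [seq [seq k :: c | c <- compsf f (n - k)] | k <- iota 1 n]
  end.
Definition comps (n : nat) : seq (seq nat) := compsf n n.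

(* It is the free associative algebra on H_1, H_2, ..., i.e. the
   algebra of the free monoid of words in positive integers: an element
   is a coefficient function on words beta, with H_beta the indicator of
   beta.  We use arbitrary coefficient functions seq nat -> C (the product
   below only ever involves finite sums) and single out NSym by the
   predicate [in_NSym]: finite support consisting of compositions.      *)
Definition nfun := seq nat -> C.

Definition in_NSym (f : nfun) : Prop :=
  exists d : nat, forall beta, f beta != 0 -> is_comp beta /\ (sumn beta <= d)%N.

Definition nmul (f g : nfun) : nfun :=
  fun beta => \sum_(i < (size beta).+1) f (take i beta) * g (drop i beta).
Definition none : nfun := fun beta => (beta == [::])%:R.
Definition nprod (fs : seq nfun) : nfun := foldr nmul none fs.

Definition Hn (n : nat) : nfun := fun beta => (beta == [:: n])%:R.

(* \hat B(a,b)_n = sum over compositions beta of n of a^(n-l) b^(l-1) H_beta,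
   and \hat B(a,b)_0 = 1.  (x ^+ 0 = 1, so 0^0 = 1.) *)
Definition Bhat (a b : C) (n : nat) : nfun :=
  if n == 0%N then none else
  fun beta => if beta \in comps n
              then a ^+ (n - size beta) * b ^+ (size beta).-1 else 0.

(* Formal power series in x_1, x_2, ...: coefficient functions on
   exponent vectors alpha : seq nat (alpha_i = exponent of x_(i+1); trailing
   zeros are irrelevant for the symmetric series considered).                            *)
Definition sfun := seq nat -> C.

(* alpha and alpha' describe the same multiset of nonzero exponents *)
Definition same_nonzero (al al' : seq nat) : bool :=
  perm_eq (al ++ nseq (size al') 0%N) (al' ++ nseq (size al) 0%N).

Definition in_Sym (f : sfun) : Prop :=
  (forall al al', same_nonzero al al' -> f al = f al') /\
  (exists d : nat, forall al, f al != 0 -> (sumn al <= d)%N).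

Fixpoint below (al : seq nat) : seq (seq nat) :=
  match al with
  | [::] => [:: [::]]
  | a :: t => flatten [seq [seq k :: s | s <- below t] | k <- iota 0 a.+1]
  end.
Fixpoint subv (al be : seq nat) : seq nat :=
  match al, be with
  | a :: t, b :: u => (a - b)%N :: subv t u
  | _, _ => al
  end.

Definition smul (f g : sfun) : sfun :=
  fun al => \sum_(be <- below al) f be * g (subv al be).
Definition sone : sfun := fun al => (sumn al == 0%N)%:R.
Definition sprod (fs : seq sfun) : sfun := foldr smul sone fs.

Definition hn (n : nat) : sfun := fun al => (sumn al == n)%:R.

(* comm : NSym -> Sym, the algebra map H_n |-> h_n, i.e. H_beta |-> h_beta.
   Since h_beta is homogeneous of degree |beta|, the coefficient of x^alpha
   in comm f = sum_beta f(beta) h_beta only involves compositions of |alpha|. *)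
Definition comm (f : nfun) : sfun :=
  fun al => \sum_(be <- comps (sumn al)) f be * sprod (map hn be) al.

(* Main.v *)
Require Import Defs.
From HB Require Import structures.
From mathcomp Require Import all_boot all_order all_algebra complex Rstruct.
From mathcomp Require Import zify.
Set Implicit Arguments. Unset Strict Implicit. Unset Printing Implicit Defensive.
Import Order.TTheory GRing.Theory Num.Theory.
Local Open Scope ring_scope.

Lemma sum_delta (T : eqType) (s : seq T) (F : T -> C) (x : T) :
  uniq s -> \sum_(y <- s) F y * (x == y)%:R = if x \in s then F x else 0.
Proof.
elim: s => [|y s IH] /=; first by rewrite big_nil.
case/andP=> ys us; rewrite big_cons IH // in_cons.
case: (eqVneq x y) => [->|nxy] /=; first by rewrite (negPf ys) mulr1 addr0.
by rewrite mulr0 add0r.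
Qed.

Lemma uniq_flat (s : seq nat) (L : nat -> seq (seq nat)) :
  uniq s -> (forall k, uniq (L k)) ->
  uniq (flatten [seq [seq k :: c | c <- L k] | k <- s]).
Proof.
elim: s => [|k s IH] //= /andP[ks us] UL.
rewrite cat_uniq IH // andbT map_inj_uniq ?UL //; last by move=> x y [].
apply/hasPn => x /flattenP [ys /mapP [j js ->] /mapP [c _ ->]].
apply/mapP => -[c' _ [ejk _]].
by move: ks; rewrite -ejk js.
Qed.

Lemma mem_compsf f n s : (n <= f)%N ->
  (s \in compsf f n) = is_comp s && (sumn s == n).
Proof.
elim: f n s => [|f IH] n s.
  rewrite leqn0 => /eqP -> /=; rewrite inE.
  by case: s => [|[|x] s] //=; rewrite addSn andbF.
move=> le /=; case: (eqVneq n 0) => [->|n0].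
  by rewrite inE; case: s => [|[|x] s] //=; rewrite addSn andbF.
apply/flattenP/idP.
  move=> [ys /mapP[k kin ->] /mapP[c cin ->]].
  move: kin; rewrite mem_iota => /andP[k1 kn].
  move: cin; rewrite IH; last by lia.
  rewrite /is_comp /= => /andP[-> /eqP sc]; rewrite k1 /=; apply/eqP; lia.
case: s => [|x c]; first by rewrite /= eq_sym (negPf n0); case: (is_comp [::]).
rewrite /is_comp /= => /andP[/andP[x1 cc] /eqP sc].
exists [seq x :: c' | c' <- compsf f (n - x)].
  apply/mapP; exists x => //; rewrite mem_iota; apply/andP; split; lia.
apply/mapP; exists c => //; rewrite IH; last by lia.
rewrite /is_comp cc /=; apply/eqP; lia.
Qed.

Lemma mem_comps n s : (s \in comps n) = is_comp s && (sumn s == n).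
Proof. exact: mem_compsf. Qed.

Lemma uniq_compsf f n : uniq (compsf f n).
Proof.
elim: f n => [|f IH] n /=; first by case: ifP.
case: ifP => // _; apply: uniq_flat => //; exact: iota_uniq.
Qed.

Lemma uniq_comps n : uniq (comps n).
Proof. exact: uniq_compsf. Qed.

Lemma tri (G : nat -> nat -> C) n :
  \sum_(i < n.+1) \sum_(j < i.+1) G j (i - j)%N =
  \sum_(j < n.+1) \sum_(k < (n - j).+1) G j k.
Proof.
elim: n => [|n IH].
  by rewrite big_ord1 big_ord1 big_ord1 big_ord1.
rewrite big_ord_recr /= IH.
rewrite [RHS]big_ord_recr /= subnn big_ord1.
rewrite [X in _ + X = _]big_ord_recr /= subnn addrA; congr (_ + _).
rewrite -big_split /=; apply: eq_bigr => j _.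
have -> : (n.+1 - j = (n - j).+1)%N by case: j => j /= ?; lia.
by rewrite [RHS]big_ord_recr.
Qed.

Section Span.
Variable mul : (seq nat -> C) -> (seq nat -> C) -> seq nat -> C.
Variable one : seq nat -> C.
Variable G : nat -> seq nat -> C.
Hypothesis mul_ext : forall f f' g g', f =1 f' -> g =1 g' -> mul f g =1 mul f' g'.
Hypothesis mulA : forall f g h, mul (mul f g) h =1 mul f (mul g h).
Hypothesis mul1 : forall f, mul one f =1 f.
Hypothesis mul_linl : forall (I : Type) (s : seq I) (c : I -> C) F g,
  mul (fun x => \sum_(i <- s) c i * F i x) g =1
  (fun x => \sum_(i <- s) c i * mul (F i) g x).
Hypothesis mul_linr : forall (I : Type) (s : seq I) (c : I -> C) F g,
  mul g (fun x => \sum_(i <- s) c i * F i x) =1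
  (fun x => \sum_(i <- s) c i * mul g (F i) x).

Definition gprod (fs : seq (seq nat -> C)) := foldr mul one fs.

Lemma gprod_cat s t : gprod (s ++ t) =1 mul (gprod s) (gprod t).
Proof.
elim: s => [|x s IH] /= y; first by rewrite mul1.
rewrite (mul_ext (f:=x) (f':=x) (g:=gprod (s ++ t)) (g':=mul (gprod s) (gprod t))) //.
by rewrite mulA.
Qed.

Definition spanned (f : seq nat -> C) := exists L : seq (C * seq nat),
  forall x, f x = \sum_(p <- L) p.1 * gprod (map G p.2) x.

Lemma spanned_ext f g : f =1 g -> spanned f -> spanned g.
Proof. by move=> fg [L HL]; exists L => x; rewrite -fg. Qed.

Lemma spanned_gen s : spanned (gprod (map G s)).
Proof. by exists [:: (1, s)] => x; rewrite big_seq1 mul1r. Qed.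

Lemma spanned0 : spanned (fun _ => 0).
Proof. by exists [::] => x; rewrite big_nil. Qed.

Lemma spanned_add (c : C) f g : spanned f -> spanned g ->
  spanned (fun x => c * f x + g x).
Proof.
move=> [L1 H1] [L2 H2].
exists ([seq (c * p.1, p.2) | p <- L1] ++ L2) => x.
rewrite big_cat big_map H1 H2 /= mulr_sumr; congr (_ + _).
by apply: eq_bigr => p _; rewrite mulrA.
Qed.

Lemma spanned_scale (c : C) f : spanned f -> spanned (fun x => c * f x).
Proof.
move=> H; apply: spanned_ext (spanned_add c H spanned0) => x.
by rewrite addr0.
Qed.

Lemma spanned_lin (I : eqType) (s : seq I) (c : I -> C) F :
  (forall i, i \in s -> c i = 0 \/ spanned (F i)) ->
  spanned (fun x => \sum_(i <- s) c i * F i x).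
Proof.
elim: s => [|i s IH] H.
  by apply: spanned_ext spanned0 => x; rewrite big_nil.
have Hs : spanned (fun x => \sum_(i <- s) c i * F i x).
  by apply: IH => j js; apply: H; rewrite in_cons js orbT.
case: (H i (mem_head _ _)) => [ci0|Hi].
  by apply: spanned_ext Hs => x; rewrite big_cons ci0 mul0r add0r.
by apply: spanned_ext (spanned_add (c i) Hi Hs) => x; rewrite big_cons.
Qed.

Lemma spanned_mul f g : spanned f -> spanned g -> spanned (mul f g).
Proof.
move=> [L1 H1] [L2 H2].
have E : mul f g =1 (fun x => \sum_(p <- L1) p.1 * (fun q => \sum_(r <- L2) r.1 * gprod (map G (p.2 ++ r.2)) q) x).
  move=> x.
  rewrite (mul_ext (f' := fun x => \sum_(p <- L1) p.1 * gprod (map G p.2) x)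
                   (g' := fun x => \sum_(p <- L2) p.1 * gprod (map G p.2) x) H1 H2).
  rewrite (mul_linl L1 (fun p => p.1) (fun p => gprod (map G p.2))).
  apply: eq_bigr => p _; congr (_ * _).
  rewrite (mul_linr L2 (fun p => p.1) (fun p => gprod (map G p.2))).
  apply: eq_bigr => r _; congr (_ * _).
  by rewrite map_cat gprod_cat.
apply: spanned_ext (fsym E) _.
apply: spanned_lin => p _; right.
exists [seq (r.1, p.2 ++ r.2) | r <- L2] => x.
by rewrite big_map.
Qed.

End Span.

Lemma nmul_ext f f' g g' : f =1 f' -> g =1 g' -> nmul f g =1 nmul f' g'.
Proof. by move=> ff gg x; apply: eq_bigr => i _; rewrite ff gg. Qed.

Lemma nmul_linl (I : Type) (s : seq I) (c : I -> C) F g :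
  nmul (fun x => \sum_(i <- s) c i * F i x) g =1
  (fun x => \sum_(i <- s) c i * nmul (F i) g x).
Proof.
move=> x; rewrite /nmul.
under eq_bigr do rewrite mulr_suml.
rewrite exchange_big; apply: eq_bigr => i _.
by rewrite mulr_sumr; apply: eq_bigr => j _; rewrite mulrA.
Qed.

Lemma nmul_linr (I : Type) (s : seq I) (c : I -> C) F g :
  nmul g (fun x => \sum_(i <- s) c i * F i x) =1
  (fun x => \sum_(i <- s) c i * nmul g (F i) x).
Proof.
move=> x; rewrite /nmul.
under eq_bigr do rewrite mulr_sumr.
rewrite exchange_big; apply: eq_bigr => i _.
rewrite mulr_sumr; apply: eq_bigr => j _.
by rewrite mulrA (mulrC (g _)) -mulrA.
Qed.

Lemma nmul1 f : nmul none f =1 f.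
Proof.
move=> x; rewrite /nmul big_ord_recl /= take0 drop0 /none eqxx mul1r big1 ?addr0 //.
move=> i _; rewrite /bump /=.
have : (size (take (1 + i) x) = 1 + i)%N by rewrite size_takel // add1n.
by case: (take _ x) => [|? ?] //= _; rewrite mul0r.
Qed.

Lemma nmul1r f : nmul f none =1 f.
Proof.
move=> x; rewrite /nmul big_ord_recr /= take_size drop_size /none eqxx mulr1 big1 ?add0r //.
move=> i _.
have : (size (drop i x) = size x - i)%N by rewrite size_drop.
have : (i < size x)%N by [].
by case: (drop _ x) => [|? ?] //= ? ?; [lia | rewrite mulr0].
Qed.

Lemma nmulA f g h : nmul (nmul f g) h =1 nmul f (nmul g h).
Proof.
move=> beta; rewrite /nmul.
pose G := fun j k => f (take j beta) * g (take k (drop j beta)) * h (drop k (drop j beta)).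
transitivity (\sum_(i < (size beta).+1) \sum_(j < i.+1) G j (i - j)%N).
  apply: eq_bigr => i _.
  have iN : (i <= size beta)%N by rewrite -ltnS.
  rewrite size_takel // mulr_suml; apply: eq_bigr => j _.
  have ji : (j <= i)%N by rewrite -ltnS.
  by rewrite /G take_takel // take_drop subnK // drop_drop subnK.
rewrite tri; apply: eq_bigr => j _.
rewrite size_drop mulr_sumr; apply: eq_bigr => k _.
by rewrite /G mulrA.
Qed.

Lemma nmul_Hn k f beta :
  nmul (Hn k) f beta = if beta is x :: t then (x == k)%:R * f t else 0.
Proof.
rewrite /nmul; case: beta => [|x t] /=.
  by rewrite big_ord1 /Hn /= mul0r.
rewrite big_ord_recl big_ord_recl /= /Hn /= mul0r add0r big1 ?addr0.
  by rewrite take0 drop0 eqseq_cons andbT.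
move=> i _; rewrite add0n /bump /= add1n.
have : (size (take i.+1 t) = i.+1)%N by rewrite size_takel.
by case: (take _ t) => [|? ?] //= _; rewrite eqseq_cons andbF mul0r.
Qed.

Lemma Hprod g beta : nprod (map Hn g) beta = (beta == g)%:R.
Proof.
elim: g beta => [|k g IH] beta /=; first by [].
rewrite (nmul_Hn k (nprod (map Hn g)) beta).
by case: beta => [|x t] //=; rewrite IH eqseq_cons -natrM mulnb.
Qed.

Definition cB (a b : C) n (g : seq nat) := a ^+ (n - size g) * b ^+ (size g).-1.

Lemma Bhat_expand a b n beta : (0 < n)%N ->
  Bhat a b n beta = \sum_(g <- comps n) cB a b n g * nprod (map Hn g) beta.
Proof.
move=> n0; rewrite /Bhat; have -> : (n == 0%N) = false by case: n n0.
under eq_bigr do rewrite Hprod.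
by rewrite sum_delta ?uniq_comps.
Qed.

Lemma size_le_sumn s : is_comp s -> (size s <= sumn s)%N.
Proof.
elim: s => [|x s IH] //=; rewrite /is_comp /= => /andP[x0 cs].
by have := IH cs; lia.
Qed.

Lemma comp_part_lt m g k : g \in comps m -> g != [:: m] -> k \in g -> (k < m)%N.
Proof.
rewrite mem_comps => /andP[cg /eqP sg] gm kg.
case/splitPr: kg cg sg gm => u w.
rewrite /is_comp all_cat /= sumn_cat /= => /and3P[cu _ cw] sg gm.
have := size_le_sumn cu; have := size_le_sumn cw.
case: u cu sg gm => [|y u] _; case: w cw => [|z w] _ //= ; try lia.
by rewrite add0n addn0 => ->; rewrite eqxx.
Qed.

Section PartA.
Variables (a b : C).
Hypothesis ha : a != 0.

Definition SA := spanned nmul none (Bhat a b).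

Lemma SA_mul f g : SA f -> SA g -> SA (nmul f g).
Proof. exact: (spanned_mul nmul_ext nmulA nmul1 nmul_linl nmul_linr). Qed.

Lemma SA_H (g : seq nat) : (forall k, k \in g -> SA (Hn k)) -> SA (nprod (map Hn g)).
Proof.
elim: g => [|k g IH] H /=.
  exact: (spanned_gen nmul none (Bhat a b) [::]).
apply: SA_mul; first by apply: H; rewrite mem_head.
by apply: IH => j jg; apply: H; rewrite in_cons jg orbT.
Qed.

Lemma SA_Hn m : (0 < m)%N -> SA (Hn m).
Proof.
elim: m {-2}m (leqnn m) => [|n IHn] m mn m0; first by case: m mn m0.
have IH : forall k, (0 < k < m)%N -> SA (Hn k).
  by move=> k /andP[k0 km]; apply: IHn => //; lia.
have cm : cB a b m [:: m] = a ^+ (m - 1)%N.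
  by rewrite /cB /= expr0 mulr1.
have mc : [:: m] \in comps m by rewrite mem_comps /is_comp /= m0 addn0 eqxx.
pose S := fun beta => \sum_(g <- [seq g <- comps m | g != [:: m]])
              cB a b m g * nprod (map Hn g) beta.
have E : Hn m =1 (fun beta => (a ^+ (m - 1)%N)^-1 * (1 * Bhat a b m beta + ((-1) * S beta))).
  move=> beta; rewrite Bhat_expand // (bigD1_seq [:: m]) ?uniq_comps //= cm.
  by rewrite /S big_filter mul1r mulN1r addrK nmul1r mulKf ?expf_neq0.
apply: spanned_ext (fsym E) _.
apply: spanned_scale; apply: spanned_add.
  by apply: spanned_ext (spanned_gen nmul none (Bhat a b) [:: m]) => x; rewrite /= nmul1r.
apply: spanned_scale.
apply: spanned_lin => g; rewrite mem_filter mem_comps => /andP[gm /andP[cg /eqP sg]].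
right; apply: SA_H => k kg; apply: IH; apply/andP; split.
  by move: cg => /allP /(_ k kg).
apply: (comp_part_lt (g := g)) => //; by rewrite mem_comps cg sg eqxx.
Qed.
Lemma partA f : in_NSym f -> exists L : seq (C * seq nat),
  forall beta, f beta = \sum_(p <- L) p.1 * nprod (map (Bhat a b) p.2) beta.
Proof.
move=> [d Hd].
pose s := undup (flatten [seq comps m | m <- iota 0 d.+1]).
have E : f =1 fun beta => \sum_(g <- s) f g * nprod (map Hn g) beta.
  move=> beta; under eq_bigr do rewrite Hprod.
  rewrite sum_delta ?undup_uniq // mem_undup.
  case: ifP => // nin; case: (eqVneq (f beta) 0) => // /Hd [cb sb].
  move/negbT: nin => /negP; case; apply/flattenP; exists (comps (sumn beta)).
    by apply/mapP; exists (sumn beta) => //; rewrite mem_iota add0n ltnS.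
  by rewrite mem_comps cb eqxx.
have : SA f.
  apply: spanned_ext (fsym E) _; apply: spanned_lin => g.
  rewrite mem_undup => /flattenP [_ /mapP[m _ ->]].
  rewrite mem_comps => /andP[cg _]; right; apply: SA_H => k kg.
  by apply: SA_Hn; exact: (allP cg k kg).
by case => L HL; exists L.
Qed.

End PartA.

Lemma big_below_cons a t (F : seq nat -> C) :
  \sum_(be <- below (a :: t)) F be = \sum_(k <- iota 0 a.+1) \sum_(s <- below t) F (k :: s).
Proof.
have -> : below (a :: t) = flatten [seq [seq k :: s | s <- below t] | k <- iota 0 a.+1] by [].
by rewrite big_flatten big_map; apply: eq_bigr => k _; rewrite big_map.
Qed.

Lemma mem_below_cons a t x :
  (x \in below (a :: t)) = if x is k :: s then (k <= a)%N && (s \in below t) else false.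
Proof.
apply/flattenP/idP.
  move=> [ys /mapP[k kin ->] /mapP[s sin ->]].
  by move: kin; rewrite mem_iota add0n ltnS /= => ->.
case: x => [|k s] // /andP[ka sb].
exists [seq k :: s' | s' <- below t]; last by apply/mapP; exists s.
by apply/mapP; exists k => //; rewrite mem_iota add0n ltnS.
Qed.

Lemma below_size al be : be \in below al -> size be = size al.
Proof.
elim: al be => [|a t IH] [|k s] //; rewrite ?inE // mem_below_cons //.
by move=> /andP[_ /IH /= ->].
Qed.

Lemma sumn_subv al be : be \in below al -> (sumn (subv al be) + sumn be)%N = sumn al.
Proof.
elim: al be => [|a t IH] [|k s] //; rewrite ?inE // mem_below_cons //.
move=> /andP[ka /IH] /=; lia.
Qed.

Lemma uniq_below al : uniq (below al).
Proof.
elim: al => [|a t IH] //.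
have -> : below (a :: t) = flatten [seq [seq k :: s | s <- below t] | k <- iota 0 a.+1] by [].
apply: uniq_flat => //; exact: iota_uniq.
Qed.

Lemma below_self al : al \in below al.
Proof. by elim: al => [|a t IH]; rewrite ?inE // mem_below_cons leqnn. Qed.

Lemma subv_self al : subv al al = nseq (size al) 0%N.
Proof. by elim: al => [|a t IH] //=; rewrite subnn IH. Qed.

Lemma zero_below al : nseq (size al) 0%N \in below al.
Proof. by elim: al => [|a t IH]; rewrite ?inE // mem_below_cons. Qed.

Lemma subv_zero al : subv al (nseq (size al) 0%N) = al.
Proof. by elim: al => [|a t IH] //=; rewrite subn0 IH. Qed.

Lemma below_sum0 al be : be \in below al -> sumn be = 0%N -> be = nseq (size al) 0%N.
Proof.
elim: al be => [|a t IH] [|k s] //; rewrite ?inE // mem_below_cons //=.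
move=> /andP[ka sb] e.
have -> : k = 0%N by lia.
by rewrite (IH s) //; lia.
Qed.

Lemma below_subv0 al be : be \in below al -> sumn (subv al be) = 0%N -> be = al.
Proof.
elim: al be => [|a t IH] [|k s] //; rewrite ?inE // mem_below_cons //=.
move=> /andP[ka sb] e.
have -> : k = a by lia.
by rewrite (IH s) //; lia.
Qed.

Lemma iota_ord n (F : nat -> C) : \sum_(k <- iota 0 n) F k = \sum_(k < n) F k.
Proof. by rewrite -(big_mkord xpredT) /index_iota subn0. Qed.

Lemma sum_unique (T : eqType) (s : seq T) (x : T) (P : pred T) (F : T -> C) :
  uniq s -> x \in s -> P x -> (forall y, y \in s -> P y -> y = x) ->
  \sum_(y <- s) (P y)%:R * F y = F x.
Proof.
move=> us xs Px U; rewrite (bigD1_seq x) //= Px mul1r big1_seq ?addr0 //.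
move=> y /andP[yx ys]; case: (boolP (P y)) => Py; last by rewrite mul0r.
by move: yx; rewrite (U y ys Py) eqxx.
Qed.

Lemma smul_ext f f' g g' : f =1 f' -> g =1 g' -> smul f g =1 smul f' g'.
Proof. by move=> ff gg x; apply: eq_bigr => i _; rewrite ff gg. Qed.

Lemma smul_linl (I : Type) (s : seq I) (c : I -> C) F g :
  smul (fun x => \sum_(i <- s) c i * F i x) g =1
  (fun x => \sum_(i <- s) c i * smul (F i) g x).
Proof.
move=> x; rewrite /smul.
under eq_bigr do rewrite mulr_suml.
rewrite exchange_big; apply: eq_bigr => i _.
by rewrite mulr_sumr; apply: eq_bigr => j _; rewrite mulrA.
Qed.

Lemma smul_linr (I : Type) (s : seq I) (c : I -> C) F g :
  smul g (fun x => \sum_(i <- s) c i * F i x) =1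
  (fun x => \sum_(i <- s) c i * smul g (F i) x).
Proof.
move=> x; rewrite /smul.
under eq_bigr do rewrite mulr_sumr.
rewrite exchange_big; apply: eq_bigr => i _.
rewrite mulr_sumr; apply: eq_bigr => j _.
by rewrite mulrA (mulrC (g _)) -mulrA.
Qed.

Lemma smul1 f : smul sone f =1 f.
Proof.
move=> x; rewrite /smul /sone.
rewrite (@sum_unique _ _ (nseq (size x) 0%N) (fun be => sumn be == 0%N)
          (fun be => f (subv x be))) ?uniq_below ?zero_below ?subv_zero //.
  by elim: (size x) => [|n IH] //=.
by move=> y yb /eqP; apply: below_sum0.
Qed.

Lemma smul1r f : smul f sone =1 f.
Proof.
move=> x; rewrite /smul /sone.
under eq_bigr do rewrite mulrC.
rewrite (@sum_unique _ _ x (fun be => sumn (subv x be) == 0%N) f) ?uniq_below ?below_self ?subv_self //.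
  by elim: (size x) => [|n IH] //=.
by move=> y yb /eqP; apply: below_subv0.
Qed.

Lemma tri_iota (G : nat -> nat -> C) n :
  \sum_(i <- iota 0 n.+1) \sum_(j <- iota 0 i.+1) G j (i - j)%N =
  \sum_(j <- iota 0 n.+1) \sum_(k <- iota 0 (n - j).+1) G j k.
Proof.
rewrite (iota_ord n.+1 (fun i => \sum_(j <- iota 0 i.+1) G j (i - j)%N)).
rewrite (iota_ord n.+1 (fun j => \sum_(k <- iota 0 (n - j).+1) G j k)).
transitivity (\sum_(i < n.+1) \sum_(j < i.+1) G j (i - j)%N).
  by apply: eq_bigr => i _; exact: (iota_ord i.+1 (fun j => G j (i - j)%N)).
rewrite tri; apply: eq_bigr => j _.
by rewrite (iota_ord (n - j).+1 (fun k => G j k)).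
Qed.

Lemma T3 al (F : seq nat -> seq nat -> seq nat -> C) :
  \sum_(be <- below al) \sum_(ga <- below be) F ga (subv be ga) (subv al be) =
  \sum_(ga <- below al) \sum_(de <- below (subv al ga)) F ga de (subv (subv al ga) de).
Proof.
elim: al F => [|a t IH] F; first by rewrite /= !big_seq1.
pose H k' m r := \sum_(s' <- below t) \sum_(de <- below (subv t s'))
                   F (k' :: s') (m :: de) (r :: subv (subv t s') de).
transitivity (\sum_(k <- iota 0 a.+1) \sum_(k' <- iota 0 k.+1) H k' (k - k')%N (a - k)%N).
  rewrite big_below_cons; apply: eq_bigr => k _.
  under eq_bigr do rewrite big_below_cons.
  rewrite /= exchange_big; apply: eq_bigr => k' _.
  exact: (IH (fun x y z => F (k' :: x) ((k - k') :: y)%N ((a - k) :: z)%N)).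
transitivity (\sum_(k' <- iota 0 a.+1) \sum_(m <- iota 0 (a - k').+1) H k' m (a - k' - m)%N).
  rewrite -(tri_iota (fun j m => H j m (a - j - m)%N)).
  apply: eq_big_seq => k; rewrite mem_iota => /andP[_ ka].
  apply: eq_big_seq => k'; rewrite mem_iota => /andP[_ kk].
  by congr H; lia.
rewrite big_below_cons; apply: eq_bigr => k' _.
rewrite /H exchange_big /=; apply: eq_bigr => s' _.
by rewrite big_below_cons.
Qed.

Lemma smulA f g h : smul (smul f g) h =1 smul f (smul g h).
Proof.
move=> al; rewrite /smul.
under eq_bigr do rewrite mulr_suml.
rewrite (T3 al (fun x y z => f x * g y * h z)).
apply: eq_bigr => ga _; rewrite mulr_sumr; apply: eq_bigr => de _.
by rewrite mulrA.
Qed.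

Definition NZ (s : seq nat) := [seq x <- s | x != 0%N].
Definition symf (f : seq nat -> C) := forall al al', same_nonzero al al' -> f al = f al'.

Lemma Zdec x : perm_eq x (NZ x ++ nseq (size x - size (NZ x)) 0%N).
Proof.
have P := permEl (perm_filterC (fun v => v != 0%N) x).
rewrite perm_sym; apply: perm_trans P; rewrite perm_cat2l.
have -> : [seq v <- x | predC (fun v => v != 0%N) v] =
          nseq (size [seq v <- x | predC (fun v => v != 0%N) v]) 0%N.
  by apply/all_pred1P; apply/allP => v; rewrite mem_filter /= negbK => /andP[].
have := size_filter (fun v => v != 0%N) x; have := size_filter (predC (fun v => v != 0%N)) x.
rewrite /NZ; move=> -> ->.
by rewrite -(count_predC (fun v => v != 0%N) x) addKn perm_refl.
Qed.

Lemma NZ_cat x y : NZ (x ++ y) = NZ x ++ NZ y.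
Proof. exact: filter_cat. Qed.

Lemma NZ_nseq n : NZ (nseq n 0%N) = [::].
Proof. by elim: n. Qed.

Lemma sn_iff x y : same_nonzero x y = perm_eq (NZ x) (NZ y).
Proof.
rewrite /same_nonzero; apply/idP/idP.
  by move/(perm_filter (fun v => v != 0%N)); rewrite -!/(NZ _) !NZ_cat !NZ_nseq !cats0.
move=> P.
have Sx := perm_size (Zdec x); have Sy := perm_size (Zdec y).
have SP := perm_size P.
move: Sx Sy; rewrite !size_cat !size_nseq => Sx Sy.
apply: (perm_trans (perm_cat (Zdec x) (perm_refl (nseq (size y) 0%N)))).
rewrite perm_sym.
apply: (perm_trans (perm_cat (Zdec y) (perm_refl (nseq (size x) 0%N)))).
rewrite -!catA -!nseqD perm_sym; apply: perm_cat => //.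
have -> : (size x - size (NZ x) + size y = size y - size (NZ y) + size x)%N.
  move: Sx Sy SP; set n := size (NZ x); set m := size (NZ y); set X := size x; set Y := size y.
  lia.
exact: perm_refl.
Qed.

Lemma sn_refl x : same_nonzero x x.
Proof. by rewrite sn_iff perm_refl. Qed.

Lemma sn_sym x y : same_nonzero x y = same_nonzero y x.
Proof. by rewrite !sn_iff perm_sym. Qed.

Lemma sn_trans x y z : same_nonzero x y -> same_nonzero y z -> same_nonzero x z.
Proof. rewrite !sn_iff; exact: perm_trans. Qed.

Lemma sumn_NZ x : sumn (NZ x) = sumn x.
Proof. by elim: x => [|v x IH] //=; case: eqP => [->|_] //=; rewrite IH. Qed.

Lemma sn_sumn x y : same_nonzero x y -> sumn x = sumn y.
Proof. by rewrite sn_iff -(sumn_NZ x) -(sumn_NZ y); exact: perm_sumn. Qed.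

Lemma sym_pad f : symf f -> forall x n, f (x ++ nseq n 0%N) = f x.
Proof. by move=> S x n; apply: S; rewrite sn_iff NZ_cat NZ_nseq cats0 perm_refl. Qed.

Lemma sym_perm f : symf f -> forall x y, perm_eq x y -> f x = f y.
Proof. by move=> S x y P; apply: S; rewrite sn_iff; apply: perm_filter. Qed.

Lemma sym_of f : (forall x n, f (x ++ nseq n 0%N) = f x) ->
  (forall x y, perm_eq x y -> f x = f y) -> symf f.
Proof.
move=> Hp Hq x y; rewrite sn_iff => P.
rewrite (Hq _ _ (Zdec x)) (Hq _ _ (Zdec y)) !Hp; exact: Hq.
Qed.

Fixpoint sw (i : nat) (s : seq nat) : seq nat :=
  match i, s with
  | 0, x :: y :: t => y :: x :: t
  | i'.+1, x :: t => x :: sw i' t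
  | _, _ => s
  end.

Lemma perm_sw i s : perm_eq (sw i s) s.
Proof.
elim: i s => [|i IH] [|x [|y t]] //=.
- exact: (permEl (perm_catCA [:: y] [:: x] t)).
- by rewrite perm_cons IH.
- by rewrite perm_cons IH.
Qed.

Lemma sum_below_sw i al (F : seq nat -> seq nat -> C) :
  \sum_(be <- below (sw i al)) F be (subv (sw i al) be) =
  \sum_(be <- below al) F (sw i be) (sw i (subv al be)).
Proof.
elim: i al F => [|i IH] al F.
  case: al => [|x [|y t]].
  - by rewrite /= !big_seq1.
  - by rewrite !big_below_cons; apply: eq_bigr => k _; rewrite /= !big_seq1.
  have -> : sw 0 [:: x, y & t] = [:: y, x & t] by [].
  rewrite !big_below_cons.
  under eq_bigr do rewrite big_below_cons.
  under [RHS]eq_bigr do rewrite big_below_cons.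
  rewrite exchange_big; apply: eq_bigr => l _; apply: eq_bigr => k _.
  by apply: eq_bigr.
case: al => [|a t]; first by rewrite /= !big_seq1.
have -> : sw i.+1 (a :: t) = a :: sw i t by [].
rewrite !big_below_cons; apply: eq_bigr => k _.
exact: (IH t (fun u v => F (k :: u) ((a - k) :: v)%N)).
Qed.

Lemma move_front t1 x t2 (P : seq nat -> C) : (forall i u, P (sw i u) = P u) ->
  P (t1 ++ x :: t2) = P (x :: t1 ++ t2).
Proof.
elim: t1 P => [|y t1 IH] P HP //=.
transitivity (P [:: y, x & t1 ++ t2]).
  apply: (IH (fun u => P (y :: u))) => i u.
  exact: (HP i.+1 (y :: u)).
exact: (HP 0%N [:: x, y & t1 ++ t2]).
Qed.

Lemma perm_by_sw s (P : seq nat -> C) : (forall i u, P (sw i u) = P u) ->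
  forall t, perm_eq s t -> P s = P t.
Proof.
elim: s P => [|x s IH] P HP t.
  by move=> /perm_size; case: t.
move=> pt; have xt : x \in t by rewrite -(perm_mem pt) mem_head.
case/splitPr: xt pt => t1 t2 pt.
rewrite move_front //.
apply: (IH (fun u => P (x :: u))).
  move=> i u; exact: (HP i.+1 (x :: u)).
rewrite -(perm_cons x); apply: (perm_trans pt).
exact: (permEl (perm_catCA t1 [:: x] t2)).
Qed.

Lemma below_nseq0 n : below (nseq n 0%N) = [:: nseq n 0%N].
Proof. by elim: n => [|n IH] //=; rewrite IH. Qed.

Lemma sum_below_pad x n (F : seq nat -> seq nat -> C) :
  \sum_(be <- below (x ++ nseq n 0%N)) F be (subv (x ++ nseq n 0%N) be) =
  \sum_(be <- below x) F (be ++ nseq n 0%N) (subv x be ++ nseq n 0%N).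
Proof.
elim: x F => [|a t IH] F.
  by rewrite cat0s below_nseq0 !big_seq1 /= subv_self size_nseq.
rewrite cat_cons !big_below_cons; apply: eq_bigr => k _.
exact: (IH (fun u v => F (k :: u) ((a - k) :: v)%N)).
Qed.

Lemma smul_sym f g : symf f -> symf g -> symf (smul f g).
Proof.
move=> Sf Sg; apply: sym_of.
  move=> x n; rewrite /smul.
  transitivity (\sum_(be <- below x) f (be ++ nseq n 0%N) * g (subv x be ++ nseq n 0%N)).
    exact: (sum_below_pad x n (fun u v => f u * g v)).
  by apply: eq_bigr => be _; rewrite (sym_pad Sf) (sym_pad Sg).
move=> x y; apply: perm_by_sw => i u; rewrite /smul.
transitivity (\sum_(be <- below u) f (sw i be) * g (sw i (subv u be))).
  exact: (sum_below_sw i u (fun u v => f u * g v)).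
apply: eq_bigr => be _.
by rewrite (sym_perm Sf (perm_sw i be)) (sym_perm Sg (perm_sw i _)).
Qed.

Definition hprod g := sprod (map hn g).
Definition nzc (s : seq nat) := count (fun v => v != 0%N) s.
Definition pk k : sfun := fun al => ((nzc al == 1%N) && (sumn al == k))%:R.
Definition Pprod mu := sprod (map pk mu).
Definition mS mu : sfun := fun al => (same_nonzero mu al)%:R.

Definition hom (f : sfun) m := forall al, f al != 0 -> sumn al = m.

Lemma smul_nz f g al : smul f g al != 0 ->
  exists2 be, be \in below al & (f be != 0) && (g (subv al be) != 0).
Proof.
move=> H.
case: (boolP (has (fun be => (f be != 0) && (g (subv al be) != 0)) (below al))).
  by move=> /hasP[be bin fb]; exists be.
move=> /hasPn H0; move: H; rewrite /smul big1_seq ?eqxx // => be bin.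
have := H0 be bin; rewrite negb_and !negbK => /orP[/eqP->|/eqP->].
  by rewrite mul0r.
by rewrite mulr0.
Qed.

Lemma smul_hom f g m k : hom f m -> hom g k -> hom (smul f g) (m + k)%N.
Proof.
move=> Hf Hg al /smul_nz [be bin /andP[fb gb]].
by rewrite -(sumn_subv bin) (Hf _ fb) (Hg _ gb) addnC.
Qed.

Lemma natr_nz (b : bool) : (b%:R : C) != 0 -> b.
Proof. by case: b => //; rewrite eqxx. Qed.

Lemma hn_hom n : hom (hn n) n.
Proof. by move=> al /natr_nz /eqP. Qed.

Lemma sone_hom : hom sone 0.
Proof. by move=> al /natr_nz /eqP. Qed.

Lemma pk_hom k : hom (pk k) k.
Proof. by move=> al /natr_nz /andP[_ /eqP]. Qed.

Lemma hprod_hom g : hom (hprod g) (sumn g).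
Proof.
elim: g => [|k g IH] /=; first exact: sone_hom.
exact: (smul_hom (@hn_hom k) IH).
Qed.

Lemma Pprod_hom mu : hom (Pprod mu) (sumn mu).
Proof.
elim: mu => [|k mu IH] /=; first exact: sone_hom.
exact: (smul_hom (@pk_hom k) IH).
Qed.

Lemma symf_NZ f : (forall x y, perm_eq (NZ x) (NZ y) -> f x = f y) -> symf f.
Proof. by move=> H x y; rewrite sn_iff; apply: H. Qed.

Lemma nzc_NZ x : nzc x = size (NZ x).
Proof. by rewrite /nzc /NZ size_filter. Qed.

Lemma sone_sym : symf sone.
Proof. by apply: symf_NZ => x y P; rewrite /sone -(sumn_NZ x) -(sumn_NZ y) (perm_sumn P). Qed.

Lemma hn_sym n : symf (hn n).
Proof. by apply: symf_NZ => x y P; rewrite /hn -(sumn_NZ x) -(sumn_NZ y) (perm_sumn P). Qed.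

Lemma pk_sym k : symf (pk k).
Proof.
apply: symf_NZ => x y P.
by rewrite /pk !nzc_NZ -(sumn_NZ x) -(sumn_NZ y) (perm_sumn P) (perm_size P).
Qed.

Lemma Pprod_sym mu : symf (Pprod mu).
Proof.
elim: mu => [|k mu IH] /=; first exact: sone_sym.
exact: (smul_sym (@pk_sym k) IH).
Qed.

Lemma Q_expand a b n al : (0 < n)%N ->
  comm (Bhat a b n) al = \sum_(g <- comps n) cB a b n g * hprod g al.
Proof.
move=> n0; rewrite /comm.
have nn : (n == 0%N) = false by case: n n0.
case: (eqVneq (sumn al) n) => [e|ne].
  rewrite e; apply: eq_big_seq => g gin.
  by rewrite /Bhat nn /= gin.
rewrite big1_seq; last first.
  move=> g /andP[_ gin]; rewrite /Bhat nn /=.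
  move: gin; rewrite !mem_comps => /andP[cg /eqP sg].
  by rewrite cg /= sg (negPf ne) mul0r.
rewrite big1_seq // => g /andP[_ gin].
case: (eqVneq (hprod g al) 0) => [->|/hprod_hom]; first by rewrite mulr0.
move: gin; rewrite mem_comps => /andP[_ /eqP ->] e.
by move: ne; rewrite e eqxx.
Qed.

Lemma nzc0_sum s : nzc s = 0%N -> sumn s = 0%N.
Proof. by elim: s => [|v s IH] //=; rewrite /nzc /=; case: (eqVneq v 0%N) => [->|] //=. Qed.

Lemma nzc_nseq n : nzc (nseq n 0%N) = 0%N.
Proof. by elim: n. Qed.

Lemma cnt_pk i al : (0 < i)%N ->
  \sum_(be <- below al) pk i be = (count (fun v => (i <= v)%N) al)%:R.
Proof.
move=> i0; elim: al => [|a t IH]; first by rewrite big_seq1 /pk.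
rewrite big_below_cons.
have -> : iota 0 a.+1 = 0%N :: iota 1 a by [].
rewrite big_cons.
have -> : \sum_(s <- below t) pk i (0%N :: s) = \sum_(s <- below t) pk i s.
  by apply: eq_bigr => s _; rewrite /pk /nzc /= add0n.
rewrite IH.
have E : forall k, k \in iota 1 a -> \sum_(s <- below t) pk i (k :: s) = 1 * (i == k)%:R.
  move=> k; rewrite mem_iota => /andP[k1 _].
  rewrite (eq_big_seq (fun s => (nzc s == 0%N)%:R * (i == k)%:R)); last first.
    move=> s sb; rewrite /pk /nzc /=.
    have -> : (k != 0%N) = true by case: k k1.
    case: (eqVneq (count (fun v => v != 0%N) s) 0%N) => [c0|c0].
      by rewrite c0 (nzc0_sum c0) addn0 mul1r eqxx /= addn0 eq_sym.
    by rewrite [(true + _)%N]add1n eqSS (negbTE c0) /= mul0r.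
  rewrite (@sum_unique _ _ (nseq (size t) 0%N) (fun s => nzc s == 0%N) (fun _ => (i == k)%:R))
     ?uniq_below ?zero_below ?nzc_nseq ?mul1r //.
  by move=> s sb /eqP /nzc0_sum; apply: below_sum0.
rewrite (eq_big_seq _ E) sum_delta ?iota_uniq // mem_iota /= natrD addrC.
have -> : ((0 < i) && (i < 1 + a))%N = (i <= a)%N by rewrite i0 add1n ltnS.
by case: (i <= a)%N; rewrite /= ?add0r ?addr0.
Qed.

Lemma sum_le_min v k : (\sum_(1 <= i < k.+1) ((i <= v)%N : nat) = minn v k)%N.
Proof.
elim: k => [|k IH]; first by rewrite big_geq.
rewrite big_nat_recr //= IH.
by case: leqP => h /=; lia.
Qed.

Lemma count_sum al k : (forall v, v \in al -> v <= k)%N ->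
  (\sum_(1 <= i < k.+1) count (fun v => (i <= v)%N) al = sumn al)%N.
Proof.
elim: al => [|x t IH] H /=; first by rewrite big1.
rewrite big_split /= sum_le_min IH; last by move=> v vt; apply: H; rewrite in_cons vt orbT.
have := H x (mem_head _ _); lia.
Qed.

Lemma leq_sumn_mem v s : v \in s -> (v <= sumn s)%N.
Proof.
elim: s => [|x s IH] //=; rewrite in_cons => /orP[/eqP->|/IH]; lia.
Qed.

Lemma newton k al : (0 < k)%N ->
  \sum_(1 <= i < k.+1) smul (pk i) (hn (k - i)) al = k%:R * hn k al.
Proof.
move=> k0.
have E : forall i, (1 <= i < k.+1)%N ->
    smul (pk i) (hn (k - i)) al = (sumn al == k)%:R * (count (fun v => (i <= v)%N) al)%:R.
  move=> i /andP[i1 ik]; rewrite /smul -cnt_pk // mulr_sumr.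
  apply: eq_big_seq => be bin.
  case: (eqVneq (pk i be) 0) => [->|]; first by rewrite !mul0r mulr0.
  move/pk_hom => sb; have := sumn_subv bin; rewrite sb => sv.
  rewrite /hn mulrC; congr (_ * _).
  by have -> : (sumn (subv al be) == (k - i)%N) = (sumn al == k) by apply/eqP/eqP; lia.
transitivity (\sum_(1 <= i < k.+1) (sumn al == k)%:R * (count (fun v => (i <= v)%N) al)%:R : C).
  exact: eq_big_nat.
rewrite -mulr_sumr -natr_sum /hn.
case: (eqVneq (sumn al) k) => [e|ne]; last by rewrite !mul0r mulr0.
rewrite count_sum; first by rewrite e mulr1 mul1r.
by move=> v vin; rewrite -e; apply: leq_sumn_mem.
Qed.

Section PartB.
Variables (a b : C).
Hypothesis ha : a != 0.

Definition SB := spanned smul sone (fun n => comm (Bhat a b n)).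

Lemma SB_mul f g : SB f -> SB g -> SB (smul f g).
Proof. exact: (spanned_mul smul_ext smulA smul1 smul_linl smul_linr). Qed.

Lemma SB_hprod (g : seq nat) : (forall k, k \in g -> SB (hn k)) -> SB (hprod g).
Proof.
elim: g => [|k g IH] H /=.
  exact: (spanned_gen smul sone _ [::]).
apply: SB_mul; first by apply: H; rewrite mem_head.
by apply: IH => j jg; apply: H; rewrite in_cons jg orbT.
Qed.

Lemma SB_hn m : (0 < m)%N -> SB (hn m).
Proof.
elim: m {-2}m (leqnn m) => [|n IHn] m mn m0; first by case: m mn m0.
have IH : forall k, (0 < k < m)%N -> SB (hn k).
  by move=> k /andP[k0 km]; apply: IHn => //; lia.
have cm : cB a b m [:: m] = a ^+ (m - 1)%N.
  by rewrite /cB /= expr0 mulr1.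
have mc : [:: m] \in comps m by rewrite mem_comps /is_comp /= m0 addn0 eqxx.
pose S := fun al => \sum_(g <- [seq g <- comps m | g != [:: m]])
              cB a b m g * hprod g al.
have E : hn m =1 (fun al => (a ^+ (m - 1)%N)^-1 * (1 * comm (Bhat a b m) al + ((-1) * S al))).
  move=> al; rewrite Q_expand // (bigD1_seq [:: m]) ?uniq_comps //= cm.
  rewrite /S big_filter mul1r mulN1r addrK mulKf ?expf_neq0 //.
  exact: (esym (smul1r (hn m) al)).
apply: spanned_ext (fsym E) _.
apply: spanned_scale; apply: spanned_add.
  by apply: spanned_ext (spanned_gen smul sone _ [:: m]) => x; rewrite /= smul1r.
apply: spanned_scale.
apply: spanned_lin => g; rewrite mem_filter mem_comps => /andP[gm /andP[cg /eqP sg]].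
right; apply: SB_hprod => k kg; apply: IH; apply/andP; split.
  by move: cg => /allP /(_ k kg).
apply: (comp_part_lt (g := g)) => //; by rewrite mem_comps cg sg eqxx.
Qed.

Lemma SB_pk k : (0 < k)%N -> SB (pk k).
Proof.
elim: k {-2}k (leqnn k) => [|n IHn] k kn k0; first by case: k kn k0.
have IH : forall i, (0 < i < k)%N -> SB (pk i).
  by move=> i /andP[i0 ik]; apply: IHn => //; lia.
have E : pk k =1 (fun al => k%:R * hn k al +
    (-1) * \sum_(i <- index_iota 1 k) 1 * smul (pk i) (hn (k - i)) al).
  move=> al; have := newton al k0.
  rewrite big_nat_recr //= subnn.
  have -> : smul (pk k) (hn 0) al = pk k al by exact: smul1r.
  have -> : \sum_(1 <= i < k) 1 * smul (pk i) (hn (k - i)) al =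
            \sum_(1 <= i < k) smul (pk i) (hn (k - i)) al.
    by apply: eq_bigr => i _; rewrite mul1r.
  by move=> <-; rewrite mulN1r (addrC _ (pk k al)) addrK.
apply: spanned_ext (fsym E) _.
apply: spanned_add; first exact: SB_hn.
apply: spanned_scale; apply: spanned_lin => i; rewrite mem_index_iota => /andP[i1 ik].
right; apply: SB_mul; first by apply: IH; rewrite i1.
by apply: SB_hn; rewrite subn_gt0.
Qed.

Lemma SB_Pprod mu : is_comp mu -> SB (Pprod mu).
Proof.
elim: mu => [|k mu IH] /=.
  by move=> _; exact: (spanned_gen smul sone _ [::]).
rewrite /is_comp /= => /andP[k0 cm].
by apply: SB_mul; [exact: SB_pk | exact: IH].
Qed.

End PartB.

Lemma nz_le (a k : nat) : (k <= a)%N ->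
  ((a != 0%N) <= (k != 0%N) + (a - k != 0%N))%N.
Proof. by case: a => [|a] //; case: k => [|k] //=; rewrite subSS; case: (a - k)%N. Qed.

Lemma nzc_sub al be : be \in below al -> (nzc al <= nzc be + nzc (subv al be))%N.
Proof.
elim: al be => [|a t IH] [|k s] //; rewrite ?inE // mem_below_cons //.
move=> /andP[ka /IH h]; rewrite /nzc /= -!/(nzc _).
have := nz_le ka; lia.
Qed.

Lemma sum0_nzc s : sumn s = 0%N -> nzc s = 0%N.
Proof. by move=> /eqP /natnseq0P ->; exact: nzc_nseq. Qed.

Lemma single be ga k : ga \in below be -> nzc ga = 1%N -> sumn ga = k ->
  (nzc (subv be ga) < nzc be)%N -> perm_eq (NZ be) (k :: NZ (subv be ga)).
Proof.
elim: be ga => [|b t IH] [|c s] //; rewrite ?inE // mem_below_cons //.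
move=> /andP[cb sb].
case: (eqVneq c 0%N) => [->|c0].
  rewrite /nzc /= -!/(nzc _) subn0 !add0n => n1 sk.
  have IH' := IH s sb n1 sk.
  case: (eqVneq b 0%N) => [->|b0] /=.
    by rewrite !add0n => /IH'.
  rewrite !add1n ltnS => /IH' P.
  have P' : perm_eq (b :: NZ t) (b :: k :: NZ (subv t s)) by rewrite perm_cons.
  rewrite /NZ /=; apply: (perm_trans P').
  exact: (permEl (perm_catCA [:: b] [:: k] _)).
rewrite /nzc /= -!/(nzc _) c0 add1n => /eqP; rewrite eqSS => /eqP n0.
have s0 := nzc0_sum n0; rewrite s0 addn0 => ck.
rewrite (below_sum0 sb s0) subv_zero -ck.
case: (eqVneq (b - c)%N 0%N) => [bc|bc]; last first.
  have -> : (b != 0%N) = true by apply/eqP => b0; move: bc; rewrite b0.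
  by rewrite add1n ltnn.
have -> : b = c by lia.
by rewrite c0 /= => _; rewrite perm_refl.
Qed.

Lemma pk_nz k ga : pk k ga != 0 -> nzc ga = 1%N /\ sumn ga = k.
Proof. by move=> /natr_nz /andP[/eqP -> /eqP ->]. Qed.

Lemma Pprod_nzc mu be : Pprod mu be != 0 -> (nzc be <= size mu)%N.
Proof.
elim: mu be => [|k mu IH] be /=.
  by move=> /natr_nz /eqP /sum0_nzc ->.
move=> /smul_nz [ga gb /andP[/pk_nz [n1 _] /IH h]].
have := nzc_sub gb; rewrite /=; move: h; set m := size mu; lia.
Qed.

Lemma Pprod_perm mu be : Pprod mu be != 0 -> (size mu <= nzc be)%N -> perm_eq (NZ be) mu.
Proof.
elim: mu be => [|k mu IH] be /=.
  move=> /natr_nz /eqP /sum0_nzc; rewrite nzc_NZ => /size0nil -> _.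
  exact: perm_refl.
move=> /smul_nz [ga gb /andP[/pk_nz [n1 sk] pz]] hs.
have h1 := Pprod_nzc pz; have h2 := nzc_sub gb.
move: hs h1 h2; rewrite /=; set m := size mu => hs h1 h2.
have P := IH _ pz (ltac:(lia)).
apply: (perm_trans (single gb n1 sk (ltac:(lia)))).
by rewrite perm_cons.
Qed.

Lemma le_sum_elem (T : eqType) (s : seq T) x (F : T -> C) :
  x \in s -> (forall y, 0 <= F y) -> F x <= \sum_(y <- s) F y.
Proof.
elim: s => [|y s IH] //; rewrite in_cons big_cons => /orP[/eqP->|xs] H.
  by rewrite lerDl sumr_ge0.
apply: (le_trans (IH xs H)); by rewrite lerDr.
Qed.

Lemma Pprod_ge0 mu be : 0 <= Pprod mu be.
Proof.
elim: mu be => [|k mu IH] be /=; first exact: ler0n.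
by apply: sumr_ge0 => ga _; apply: mulr_ge0; [exact: ler0n | exact: IH].
Qed.

Lemma pk_single k n : (0 < k)%N -> pk k (k :: nseq n 0%N) = 1.
Proof.
move=> k0; rewrite /pk /nzc /= -/(nzc _) nzc_nseq sumn_nseq mul0n addn0.
by case: k k0 => // k _; rewrite addn0 eqxx.
Qed.

Lemma Pprod_pos mu : is_comp mu -> 0 < Pprod mu mu.
Proof.
elim: mu => [|k mu IH]; first by rewrite /= /sone /= ltr01.
rewrite /is_comp /= => /andP[k0 cm].
have xin : k :: nseq (size mu) 0%N \in below (k :: mu).
  by rewrite mem_below_cons leqnn zero_below.
rewrite /Pprod /= -/(Pprod mu) /smul.
have H := le_sum_elem (F := fun ga => pk k ga * Pprod mu (subv (k :: mu) ga)) xin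
  (fun y => mulr_ge0 (ler0n _ _) (Pprod_ge0 mu _)).
apply: (lt_le_trans _ H).
rewrite pk_single // mul1r /= subnn subv_zero.
have -> : Pprod mu (0%N :: mu) = Pprod mu mu.
  by apply: Pprod_sym; rewrite sn_iff /NZ /= perm_refl.
exact: IH.
Qed.

Lemma geq_trans' : transitive geq.
Proof. by move=> y x z /= h1 h2; apply: leq_trans h2 h1. Qed.

Lemma geq_total' : total geq.
Proof. by move=> x y /=; apply: leq_total. Qed.

Lemma geq_anti : antisymmetric geq.
Proof. by move=> x y /= h; apply/eqP; rewrite eqn_leq andbC. Qed.

Definition parts d := undup [seq sort geq s | s <- flatten [seq comps m | m <- iota 0 d.+1]].

Lemma comp_sort s : is_comp s -> is_comp (sort geq s).
Proof. by rewrite /is_comp (perm_all _ (permEl (perm_sort geq s))). Qed.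

Lemma mem_parts d nu : nu \in parts d ->
  [/\ is_comp nu, sorted geq nu & (sumn nu <= d)%N].
Proof.
rewrite mem_undup => /mapP [s /flattenP [_ /mapP [m min ->]]].
rewrite mem_comps => /andP[cs /eqP sm] ->.
split; [exact: comp_sort | exact: (sort_sorted geq_total') |].
rewrite (perm_sumn (permEl (perm_sort geq s))) sm.
by move: min; rewrite mem_iota add0n ltnS.
Qed.

Lemma NZ_is_comp be : is_comp (NZ be).
Proof. by apply/allP => v; rewrite mem_filter => /andP[v0 _]; rewrite lt0n. Qed.

Lemma NZ_comp nu : is_comp nu -> NZ nu = nu.
Proof.
move=> cn; apply/all_filterP; apply/allP => v vn.
by rewrite -lt0n; exact: (allP cn v vn).
Qed.

Lemma parts_has d be : (sumn be <= d)%N -> sort geq (NZ be) \in parts d.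
Proof.
move=> hd; rewrite mem_undup; apply/mapP; exists (NZ be) => //.
apply/flattenP; exists (comps (sumn be)).
  by apply/mapP; exists (sumn be) => //; rewrite mem_iota add0n ltnS.
by rewrite mem_comps NZ_is_comp sumn_NZ eqxx.
Qed.

Lemma sort_NZ_sn be : same_nonzero (sort geq (NZ be)) be.
Proof.
rewrite sn_iff NZ_comp; first exact: (permEl (perm_sort geq _)).
exact: comp_sort (NZ_is_comp be).
Qed.

Lemma parts_uniq_sn d nu be : nu \in parts d -> same_nonzero nu be -> nu = sort geq (NZ be).
Proof.
move=> /mem_parts [cn sn _]; rewrite sn_iff NZ_comp // => P.
apply: (sorted_eq geq_trans' geq_anti sn (sort_sorted geq_total' _)).
apply: (perm_trans P); rewrite perm_sym; exact: (permEl (perm_sort geq _)).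
Qed.

Lemma expand F d : symf F -> (forall be, F be != 0 -> (sumn be <= d)%N) ->
  F =1 (fun be => \sum_(nu <- parts d) F nu * mS nu be).
Proof.
move=> SF HF be.
case: (leqP (sumn be) d) => hd.
  rewrite /mS; under eq_bigr do rewrite mulrC.
  rewrite (@sum_unique _ _ (sort geq (NZ be)) (fun nu => same_nonzero nu be) F)
     ?undup_uniq ?parts_has ?sort_NZ_sn //.
    by rewrite (SF _ _ (sort_NZ_sn be)).
  by move=> y yin; apply: (parts_uniq_sn yin).
rewrite big1_seq.
  by case: (eqVneq (F be) 0) => // /HF; lia.
move=> nu /andP[_ nin]; rewrite /mS.
case: (boolP (same_nonzero nu be)) => [/sn_sumn e|]; last by rewrite mulr0.
by have [_ _] := mem_parts nin; lia.
Qed.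

Lemma M_step a b (ha : a != 0) mu : is_comp mu -> sorted geq mu ->
  (forall nu, is_comp nu -> sorted geq nu -> (size nu < size mu)%N -> SB a b (mS nu)) ->
  SB a b (mS mu).
Proof.
move=> cm sm IH.
pose d := sumn mu.
have Ex := @expand (Pprod mu) d (Pprod_sym mu)
  (fun be h => eq_leq (Pprod_hom h)).
have mup : mu \in parts d.
  rewrite mem_undup; apply/mapP; exists mu; last by rewrite (sorted_sort geq_trans').
  apply/flattenP; exists (comps d); last by rewrite mem_comps cm eqxx.
  by apply/mapP; exists d => //; rewrite mem_iota add0n ltnS leqnn.
have c0 : Pprod mu mu != 0 by apply: lt0r_neq0; exact: Pprod_pos.
pose S := fun be => \sum_(nu <- [seq nu <- parts d | nu != mu]) Pprod mu nu * mS nu be.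
have E : mS mu =1 (fun be => (Pprod mu mu)^-1 * (1 * Pprod mu be + ((-1) * S be))).
  move=> be; rewrite (Ex be) (bigD1_seq mu) ?undup_uniq //=.
  by rewrite /S big_filter mul1r mulN1r addrK mulKf.
apply: spanned_ext (fsym E) _.
apply: spanned_scale; apply: spanned_add; first exact: SB_Pprod.
apply: spanned_scale; apply: spanned_lin => nu; rewrite mem_filter => /andP[nm nin].
have [cn sn _] := mem_parts nin.
case: (ltnP (size nu) (size mu)) => h; first by right; apply: IH.
left; case: (eqVneq (Pprod mu nu) 0) => // pz; exfalso.
have := Pprod_perm pz; rewrite nzc_NZ NZ_comp // => /(_ h) P.
move: nm; rewrite (sorted_eq geq_trans' geq_anti sn sm P) eqxx.
by [].
Qed.

Lemma M a b (ha : a != 0) N mu : is_comp mu -> sorted geq mu -> (size mu <= N)%N -> SB a b (mS mu).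
Proof.
elim: N mu => [|N IH] mu cm sm hs; apply: (M_step ha) => // nu cn sn hn.
  lia.
apply: IH => //; lia.
Qed.

Lemma partB a b (ha : a != 0) g : in_Sym g -> exists L : seq (C * seq nat),
  forall al, g al = \sum_(p <- L) p.1 * sprod (map (fun n => comm (Bhat a b n)) p.2) al.
Proof.
move=> [Sg [d Hd]].
have : SB a b g.
  apply: spanned_ext (fsym (expand Sg Hd)) _.
  apply: spanned_lin => nu nin; right.
  have [cn sn _] := mem_parts nin.
  exact: (@M a b ha (size nu) nu cn sn (leqnn _)).
by case => L HL; exists L.
Qed.

Theorem corollary4p11 (a b : C) (ha : a != 0) :
  (forall f : nfun, in_NSym f ->
     exists L : seq (C * seq nat),
       forall beta, f beta =
         \sum_(p <- L) p.1 * nprod (map (Bhat a b) p.2) beta) /\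
  (forall g : sfun, in_Sym g ->
     exists L : seq (C * seq nat),
       forall al, g al =
         \sum_(p <- L) p.1 * sprod (map (fun n => comm (Bhat a b n)) p.2) al).
Proof.
split; first exact: partA.
exact: partB.
Qed.
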